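(* For any $n\in\mathbb{N}$, the monoid $\mathrm{lps}_n$ has finite derivation type.
   Context: Let $\mathcal{A}_n=\{1<2<\cdots<n\}$. An lPS tableau is a finite (possibly empty) sequence of nonempty bottom-justified columns of boxes filled with positive integers, such that the entries of each column are strictly decreasing from top to bottom and the bottom entries of the columns form a weakly increasing sequence from left to right. Right insertion of a symbol $a$ into an lPS tableau $B$: if $a$ is greater than or equal to every entry of the bottom row, append a new column consisting of $a$ at the right end; otherwise, let $z$ be the leftmost bottom-row entry with $z>a$ and put $a$ in a new box at the bottom of the column of $z$ (the previous entries of that column move up one box). For $w=w_1\cdots w_k$, $\mathfrak{R}_\ell(w)$ is obtained by starting with the empty tableau and right-inserting $w_1,\dots,w_k$ in order. The monoid $\mathrm{lps}_n$ is the quotient of $\mathcal{A}_n^*$ by the congruence $u\equiv v\iff\mathfrak{R}_\ell(u)=\mathfrak{R}_\ell(v)$. Finite derivation type is Squier's homotopical finiteness property of finitely presented monoids. *)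

(* Defs.v *)
From Stdlib Require List.
From mathcomp Require Import all_boot.
Set Implicit Arguments. Unset Strict Implicit. Unset Printing Implicit Defensive.

(* The alphabet A_n = {1 < ... < n} is represented by 'I_n (value k stands    *)
(* for the letter k+1; the order is the same).                               *)
(* An lPS tableau is a list of columns (left to right); each column is a     *)
(* list of its entries read from the BOTTOM box upwards, so the head of a    *)
(* column is its bottom-row entry.                                           *)

Definition lps_tableau (n : nat) := seq (seq 'I_n).

Fixpoint lps_rins (n : nat) (B : lps_tableau n) (a : 'I_n) : lps_tableau n :=
  match B with
  | [::] => [:: [:: a]]
  | c :: B' =>
      match c with
      | z :: _ => if (a < z)%N then (a :: c) :: B' else c :: lps_rins B' a
      | [::] => c :: lps_rins B' a
      end
  end.

Definition lps_Rl (n : nat) (w : seq 'I_n) : lps_tableau n :=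
  foldl (@lps_rins n) [::] w.

Definition lps_cong (n : nat) (u v : seq 'I_n) : Prop := lps_Rl u = lps_Rl v.

Section Squier.
Variable m : nat.
Local Notation word := (seq 'I_m).
Variable R : seq (word * word).

(* An edge (x, rho, dir, y) of the derivation graph: rho = (l, r) in R,     *)
(* dir = true : x l y -> x r y ;  dir = false : x r y -> x l y.             *)
Record edge := Edge { e_left : word; e_rule : word * word;
                      e_dir : bool; e_right : word }.

Definition edge_ok (e : edge) : Prop := List.In (e_rule e) R.

Definition e_src (e : edge) : word :=
  e_left e ++ (if e_dir e then (e_rule e).1 else (e_rule e).2) ++ e_right e.
Definition e_tgt (e : edge) : word :=
  e_left e ++ (if e_dir e then (e_rule e).2 else (e_rule e).1) ++ e_right e.

Definition e_inv (e : edge) : edge :=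
  Edge (e_left e) (e_rule e) (~~ e_dir e) (e_right e).

Definition e_whisk (x y : word) (e : edge) : edge :=
  Edge (x ++ e_left e) (e_rule e) (e_dir e) (e_right e ++ y).

Fixpoint is_path (s : word) (p : seq edge) (t : word) : Prop :=
  match p with
  | [::] => s = t
  | e :: p' => edge_ok e /\ e_src e = s /\ is_path (e_tgt e) p' t
  end.

Definition thue_conv (u v : word) : Prop := exists p, is_path u p v.

(* A homotopy basis candidate: triples (s, p, q) of paths from s.        *)
Variable P : seq (word * seq edge * seq edge).

Inductive homot : word -> seq edge -> seq edge -> Prop :=
| homot_refl s p t : is_path s p t -> homot s p p
| homot_sym s p q : homot s p q -> homot s q p
| homot_trans s p q r : homot s p q -> homot s q r -> homot s p r
| homot_basis s p q : List.In (s, p, q) P -> homot s p q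
| homot_inv e : edge_ok e -> homot (e_src e) [:: e; e_inv e] [::]
| homot_peiffer e1 e2 : edge_ok e1 -> edge_ok e2 ->
    homot (e_src e1 ++ e_src e2)
          [:: e_whisk [::] (e_src e2) e1; e_whisk (e_tgt e1) [::] e2]
          [:: e_whisk (e_src e1) [::] e2; e_whisk [::] (e_tgt e2) e1]
| homot_whisk x y s p q : homot s p q ->
    homot (x ++ s ++ y) (map (e_whisk x y) p) (map (e_whisk x y) q)
| homot_comp u r s p q t w v :
    is_path u r s -> is_path s p t -> is_path s q t -> is_path t w v ->
    homot s p q -> homot u (r ++ p ++ w) (r ++ q ++ w).

Definition homotopy_basis : Prop :=
  (forall s p q, List.In (s, p, q) P ->
     exists t, is_path s p t /\ is_path s q t) /\
  (forall s t p q, is_path s p t -> is_path s q t -> homot s p q).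

End Squier.

(* Finite derivation type for the monoid M = A^* / eqv (eqv a congruence on *)
(* the free monoid over the finite alphabet A): there is a finite           *)
(* presentation <B | R> of M (B = 'I_m, g sends generators to words         *)
(* representing them, inducing an isomorphism B^*/R ~= A^*/eqv) whose      *)
(* derivation graph admits a finite homotopy basis P.                        *)

Definition presents (A : finType) (eqv : seq A -> seq A -> Prop)
  (m : nat) (g : 'I_m -> seq A) (R : seq (seq 'I_m * seq 'I_m)) : Prop :=
  (forall w : seq A, exists u : seq 'I_m, eqv (flatten (map g u)) w) /\
  (forall u v : seq 'I_m,
     eqv (flatten (map g u)) (flatten (map g v)) <-> thue_conv R u v).

Definition finite_derivation_type (A : finType)
  (eqv : seq A -> seq A -> Prop) : Prop :=
  exists (m : nat) (g : 'I_m -> seq A) (R : seq (seq 'I_m * seq 'I_m))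
         (P : seq (seq 'I_m * seq (edge m) * seq (edge m))),
    presents eqv g R /\ homotopy_basis R P.

(* Main.v *)
Require Import Defs.
From mathcomp Require Import all_boot zify.
Set Implicit Arguments. Unset Strict Implicit. Unset Printing Implicit Defensive.

Section Tab.
Variable n : nat.
Local Notation tab := (seq (seq 'I_n)).
Local Notation rins := (@lps_rins n).

Definition ltO (a b : 'I_n) := (a < b)%N.

Definition skipc (y : 'I_n) (c : seq 'I_n) : bool :=
  if c is z :: _ then (z <= y)%N else true.
Definition hasb (b : 'I_n) (c : seq 'I_n) : bool :=
  if c is z :: _ then z == b else false.

Lemma rins_skip (A B : tab) y : all (skipc y) A -> rins (A ++ B) y = A ++ rins B y.
Proof.
elim: A => [|c A IH] //= /andP [Hc HA].
case: c Hc => [|z c] /= Hc; first by rewrite IH.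
by rewrite ltnNge Hc /= IH.
Qed.

Lemma rins_take (A B : tab) (x : 'I_n) : has (fun c => ~~ skipc x c) A -> rins (A ++ B) x = rins A x ++ B.
Proof.
elim: A => [|c A IH] //= /orP [Hc|HA].
  case: c Hc => [|z c] //= Hc. by rewrite ltnNge Hc.
case: c => [|z c] /=; first by rewrite IH.
by case: ifP => // _; rewrite IH.
Qed.

Lemma skip_rins (A : tab) (x y : 'I_n) : all (skipc y) A -> (x <= y)%N -> all (skipc y) (rins A x).
Proof.
elim: A => [|c A IH] /=; first by move=> _ ->.
move=> /andP [Hc HA] Hxy.
case: c Hc => [|z c] /= Hc; first by rewrite IH.
by case: ifP => /= _; rewrite ?Hxy ?HA ?Hc ?IH.
Qed.

Lemma rins_split (T : tab) b : exists A B, rins T b = A ++ B /\ all (skipc b) A /\ has (hasb b) A.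
Proof.
elim: T => [|c T [A [B [E [H1 H2]]]]] /=.
  by exists [:: [:: b]], [::]; rewrite /= leqnn eqxx.
case: c => [|z c].
  by exists ([::] :: A), B; rewrite E /= H1 H2 ?orbT.
case: ifP => Hb.
  by exists [:: b :: z :: c], T; rewrite /= leqnn eqxx.
by exists ((z :: c) :: A), B; rewrite E /= H1 H2 ?orbT leqNgt Hb.
Qed.

Lemma foldl_skip (A B : tab) ys : (forall y, y \in ys -> all (skipc y) A) ->
  foldl rins (A ++ B) ys = A ++ foldl rins B ys.
Proof.
elim: ys B => [|y ys IH] B //= H.
rewrite rins_skip ?IH //; first by move=> z Hz; apply: H; rewrite inE Hz orbT.
by apply: H; rewrite inE eqxx.
Qed.

Fixpoint valid (T : tab) : bool :=
  if T is c :: T' then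
    (if c is z :: _ then sorted ltO c && all (all (fun y : 'I_n => (z <= y)%N)) T' else false) && valid T'
  else true.

Definition reading (T : tab) : seq 'I_n := flatten (map rev T).

Lemma reading_cons c (S : tab) : reading (c :: S) = rev c ++ reading S.
Proof. by []. Qed.

Lemma skipc_mono (A : tab) (z y : 'I_n) : all (skipc z) A -> (z <= y)%N -> all (skipc y) A.
Proof.
move=> H Hzy; apply/allP => c Hc; move/allP: H => /(_ c Hc).
by case: c {Hc} => //= w _ H; apply: leq_trans H Hzy.
Qed.

Lemma mem_reading (S : tab) (z y : 'I_n) : all (all (fun y : 'I_n => (z <= y)%N)) S -> y \in reading S -> (z <= y)%N.
Proof.
elim: S => [|c S IH] //= /andP [Hc HS]; rewrite mem_cat => /orP [Hy|Hy]; last exact: IH.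
by move/allP: Hc; apply; rewrite -mem_rev.
Qed.

Lemma step (S T : tab) (x : 'I_n) : valid S ->
  foldl rins T (reading S ++ [:: x]) = foldl rins T (reading (rins S x)).
Proof.
elim: S T => [|c S IH] T //=.
case: c => [|z c] //= /andP [/andP [Hs Hall] HS].
case: ifP => Hxz /=.
  rewrite !reading_cons (rev_cons x) -cats1 -!catA !foldl_cat rev_cons -cats1 foldl_cat /=.
  have [A [B [E [H1 H2]]]] := rins_split (foldl rins T (rev c)) z.
  rewrite E.
  have Hsk : forall y, y \in reading S -> all (skipc y) A.
    by move=> y Hy; apply: skipc_mono H1 (mem_reading Hall Hy).
  rewrite foldl_skip // rins_take; last first.
    apply: sub_has H2 => d; case: d => // w d /= /eqP ->; by rewrite -ltnNge.
  rewrite rins_take; last first.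
    apply: sub_has H2 => d; case: d => // w d /= /eqP ->; by rewrite -ltnNge.
  rewrite foldl_skip //.
  move=> y Hy; apply: skip_rins; first exact: Hsk.
  exact: leq_trans (ltnW Hxz) (mem_reading Hall Hy).
rewrite !reading_cons -catA foldl_cat IH // foldl_cat //.
Qed.

Lemma all_rins (S : tab) (x z : 'I_n) : all (all (fun y : 'I_n => (z <= y)%N)) S -> (z <= x)%N ->
  all (all (fun y : 'I_n => (z <= y)%N)) (rins S x).
Proof.
elim: S => [|d S IH] /=; first by move=> _ ->.
case/andP=> Hd HS Hzx; case: d Hd => [|w d] Hd /=; first by rewrite IH.
by case: ifP => _ /=; move: Hd => /= Hd; rewrite ?Hd ?HS ?IH ?Hzx.
Qed.

Lemma valid_rins (S : tab) (x : 'I_n) : valid S -> valid (rins S x).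
Proof.
elim: S => [|c S IH] //=.
case: c => [|z c] //= /andP [/andP [Hs Hall] HS].
case: ifP => Hxz /=.
  rewrite /ltO Hxz Hs HS /= andbT.
  apply: sub_all _ Hall => d; apply: sub_all => y; exact: leq_trans (ltnW Hxz).
rewrite Hs IH // andbT /= all_rins //.
by rewrite leqNgt Hxz.
Qed.

Lemma valid_Rl (w : seq 'I_n) : valid (lps_Rl w).
Proof.
rewrite /lps_Rl; elim/last_ind: w => [|w x IH] //.
by rewrite -cats1 foldl_cat /=; apply: valid_rins.
Qed.

Lemma foldl_reading (T : tab) u : foldl rins T u = foldl rins T (reading (lps_Rl u)).
Proof.
elim/last_ind: u => [|u x IH] //.
rewrite -cats1 foldl_cat IH -foldl_cat step ?valid_Rl //.
by rewrite /lps_Rl foldl_cat.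
Qed.

Lemma foldl_col (T : tab) c : sorted ltO c -> c != [::] ->
  (forall y, y \in c -> all (skipc y) T) -> foldl rins T (rev c) = T ++ [:: c].
Proof.
elim: c => [|z c IH] //= Hs _ H.
rewrite rev_cons -cats1 foldl_cat /=.
case: c IH Hs H => [|w c] IH Hs H.
  by rewrite /= -[T]cats0 rins_skip ?cats0 //; apply: H; rewrite inE eqxx.
rewrite IH //; first last.
  by move=> y Hy; apply: H; rewrite inE Hy orbT.
  by move: Hs => /= /andP [].
rewrite rins_skip /=; last by apply: H; rewrite inE eqxx.
by move: Hs => /= /andP [Hzw _]; rewrite ifT.
Qed.

Lemma foldl_readingS (S T : tab) : valid S -> (forall y, y \in reading S -> all (skipc y) T) ->
  foldl rins T (reading S) = T ++ S.
Proof.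
elim: S T => [|c S IH] T /=; first by rewrite cats0.
case: c => [|z c] //= /andP [/andP [Hs Hall] HS] H.
rewrite foldl_cat foldl_col //; first last.
  by move=> y Hy; apply: H; rewrite mem_cat mem_rev Hy.
rewrite IH -?catA //.
move=> y Hy; rewrite all_cat H /=; last by rewrite mem_cat Hy orbT.
by rewrite (mem_reading Hall Hy).
Qed.

Lemma Rl_reading (S : tab) : valid S -> lps_Rl (reading S) = S.
Proof. by move=> H; rewrite /lps_Rl foldl_readingS. Qed.

Lemma cong_left (v u u' : seq 'I_n) : lps_Rl u = lps_Rl u' -> lps_Rl (v ++ u) = lps_Rl (v ++ u').
Proof.
by move=> E; rewrite /lps_Rl !foldl_cat (foldl_reading _ u) (foldl_reading _ u') E.
Qed.

End Tab.

Lemma memIn (T : eqType) (x : T) s : x \in s -> List.In x s.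
Proof.
elim: s => [|y s IH] //=; rewrite inE => /orP [/eqP ->|H]; first by left.
by right; exact: IH.
Qed.
Lemma Inmem (T : eqType) (x : T) s : List.In x s -> x \in s.
Proof.
elim: s => [|y s IH] //= [->|H]; rewrite inE; first by rewrite eqxx.
by rewrite IH ?orbT.
Qed.

Section Sq.
Variable m : nat.
Local Notation word := (seq 'I_m).
Variable R : seq (word * word).
Local Notation edge := (edge m).
Local Notation Edge := (@Edge m).
Local Notation is_path := (@is_path m R).
Local Notation edge_ok := (@edge_ok m R).

Definition occ (s : word) (p : nat * (word * word)) :=
  take (size p.2.1) (drop p.1 s) == p.2.1.

Definition cand (s : word) : seq (nat * (word * word)) :=
  [seq p <- [seq (i, r) | i <- iota 0 (size s).+1, r <- R] | occ s p].

Definition mk (s : word) (p : nat * (word * word)) : edge :=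
  Edge (take p.1 s) p.2 true (drop (p.1 + size p.2.1) s).

Lemma candP s p : reflect [/\ p.1 <= size s, p.2 \in R & occ s p] (p \in cand s).
Proof.
rewrite mem_filter; apply: (iffP andP) => [[Ho Hm]|[H1 H2 H3]].
  move/allpairsP: Hm => [[i r] [Hi Hr E]]; subst p; split => //.
  by move: Hi; rewrite mem_iota add0n ltnS.
split => //; apply/allpairsP; exists (p.1, p.2); case: p H1 H2 H3 => i r H1 H2 H3.
by split => //; rewrite mem_iota add0n ltnS.
Qed.

Lemma src_whisk x y (e : edge) : e_src (e_whisk x y e) = x ++ e_src e ++ y.
Proof. by rewrite /e_src /= -!catA. Qed.
Lemma tgt_whisk x y (e : edge) : e_tgt (e_whisk x y e) = x ++ e_tgt e ++ y.
Proof. by rewrite /e_tgt /= -!catA. Qed.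
Lemma src_inv (e : edge) : e_src (e_inv e) = e_tgt e.
Proof. by rewrite /e_src /e_tgt /=; case: (e_dir e). Qed.
Lemma tgt_inv (e : edge) : e_tgt (e_inv e) = e_src e.
Proof. by rewrite /e_src /e_tgt /=; case: (e_dir e). Qed.
Lemma inv_inv (e : edge) : e_inv (e_inv e) = e.
Proof. by case: e => ? ? [] ?. Qed.

Lemma occ_split s p : occ s p -> take p.1 s ++ p.2.1 ++ drop (p.1 + size p.2.1) s = s.
Proof.
move=> /eqP H; rewrite -{1}H addnC -drop_drop.
by rewrite !cat_take_drop.
Qed.

Lemma occ_le s p : p.1 <= size s -> occ s p -> p.1 + size p.2.1 <= size s.
Proof.
move=> Hp /eqP H; have := size_take_min (size p.2.1) (drop p.1 s); rewrite H size_drop.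
move=> E; have : size p.2.1 <= size s - p.1 by rewrite E geq_minr.
by rewrite leq_subRL // addnC.
Qed.


Lemma edge_eta (e : edge) : e = Edge (e_left e) (e_rule e) (e_dir e) (e_right e).
Proof. by case: e. Qed.

Lemma mk_ok s p : p \in cand s -> [/\ edge_ok (mk s p), e_dir (mk s p) & e_src (mk s p) = s].
Proof.
move/candP => [H1 H2 H3]; split => //; first exact: memIn.
by rewrite /e_src /= occ_split.
Qed.

Lemma edge_eq x y x' y' r : x ++ r.1 ++ y = x' ++ r.1 ++ y' -> size x = size x' ->
  Edge x r true y = Edge x' r true y'.
Proof.
move=> E Hs.
have Ex : x = x' by rewrite -(take_size_cat (r.1 ++ y) (erefl (size x))) E take_size_cat.
subst x'; move/(f_equal (drop (size x + size r.1))): E.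
by rewrite catA (drop_size_cat y) ?size_cat // catA drop_size_cat ?size_cat // => ->.
Qed.

Lemma edge_mk s (e : edge) : edge_ok e -> e_dir e -> e_src e = s ->
  (size (e_left e), e_rule e) \in cand s /\ e = mk s (size (e_left e), e_rule e).
Proof.
case: e => x r [] y //=; rewrite /edge_ok /e_src /= => Hr _ Es.
have Ho : occ s (size x, r) by rewrite /occ /= -Es drop_size_cat // take_size_cat.
split; first by apply/candP; rewrite /= Ho -Es size_cat leq_addr Inmem.
apply: edge_eq; first by rewrite /= (occ_split Ho).
by rewrite /= size_takel // -Es size_cat leq_addr.
Qed.

Lemma path_cat s p t q u : is_path s p t -> is_path t q u -> is_path s (p ++ q) u.
Proof. by elim: p s => [|e p IH] s /=; [move=> -> | move=> [? [? H]] Hq; do 2 split => //; apply: IH H Hq]. Qed.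

Lemma path_catI s p q u : is_path s (p ++ q) u -> exists t, is_path s p t /\ is_path t q u.
Proof.
elim: p s => [|e p IH] s /=; first by move=> H; exists s.
by move=> [H1 [H2 /IH [t [H3 H4]]]]; exists t.
Qed.

Lemma path_det s p t t' : is_path s p t -> is_path s p t' -> t = t'.
Proof. by elim: p s => [|e p IH] s /=; [move=> <- <- | move=> [_ [_ H]] [_ [_ H']]; apply: IH H H']. Qed.

Lemma path_whisk x y s p t : is_path s p t ->
  is_path (x ++ s ++ y) (map (e_whisk x y) p) (x ++ t ++ y).
Proof.
elim: p s => [|e p IH] s /=; first by move=> ->.
move=> [H1 [<- H3]]; rewrite src_whisk; do 2 split => //; rewrite tgt_whisk; apply: IH H3.
Qed.

Definition pinv (p : seq edge) := rev (map (@e_inv m) p).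

Lemma path_inv s p t : is_path s p t -> is_path t (pinv p) s.
Proof.
elim: p s => [|e p IH] s /=; first by move=> ->.
move=> [H1 [<- H3]]; rewrite /pinv /= rev_cons -cats1.
apply: path_cat (IH _ H3) _; rewrite /= src_inv tgt_inv. by [].
Qed.

Section H.
Variable P : seq (word * seq edge * seq edge).
Hypothesis HP : forall s p q, List.In (s, p, q) P -> exists t, is_path s p t /\ is_path s q t.
Local Notation homot := (@homot m R P).

Lemma homot_path s p q : homot s p q -> exists t, is_path s p t /\ is_path s q t.
Proof.
elim => {s p q}.
- by move=> s p t H; exists t.
- by move=> s p q _ [t [H1 H2]]; exists t.
- move=> s p q r _ [t [H1 H2]] _ [t' [H3 H4]]; exists t; split => //.
  by rewrite (path_det H2 H3).
- exact: HP.
- move=> e He; exists (e_src e) => /=; rewrite src_inv tgt_inv; by repeat split.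
- move=> e1 e2 H1 H2; exists (e_tgt e1 ++ e_tgt e2) => /=.
  rewrite !src_whisk !tgt_whisk !cats0 /=.
  by repeat split.
- move=> x y s p q _ [t [H1 H2]]; exists (x ++ t ++ y); split; exact: path_whisk.
- move=> u r s p q t w v H1 H2 H3 H4 _; exists v; split; apply: path_cat H1 _; apply: path_cat H4; done.
Qed.

Lemma homot_pre u r s p q : homot s p q -> is_path u r s -> homot u (r ++ p) (r ++ q).
Proof.
move=> H Hr; have [t [H1 H2]] := homot_path H.
have := @homot_comp m R P u r s p q t [::] t Hr H1 H2 (erefl t) H.
by rewrite !cats0.
Qed.

Lemma homot_post s p q t w v : homot s p q -> is_path s p t -> is_path t w v ->
  homot s (p ++ w) (q ++ w).
Proof.
move=> H Hp Hw; have [t' [H1 H2]] := homot_path H.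
have E := path_det Hp H1; subst t'.
exact: (@homot_comp m R P s [::] s p q t w v (erefl s) H1 H2 Hw H).
Qed.

End H.


Variable M : word -> nat.
Variable nf : word -> word.
Hypothesis HR : forall r, List.In r R -> 0 < size r.1 <= 2.
Hypothesis HM : forall x r y, List.In r R -> M (x ++ r.2 ++ y) < M (x ++ r.1 ++ y).
Hypothesis Hnf1 : forall x r y, List.In r R -> nf (x ++ r.1 ++ y) = nf (x ++ r.2 ++ y).
Hypothesis Hnf2 : forall s, cand s = [::] -> nf s = s.

Lemma fwd_M (e : edge) : edge_ok e -> e_dir e -> M (e_tgt e) < M (e_src e).
Proof. by case: e => x r [] y //= H _; rewrite /e_src /e_tgt /=; apply: HM. Qed.

Lemma fwd_nf (e : edge) : edge_ok e -> nf (e_tgt e) = nf (e_src e).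
Proof. by case: e => x r [] y //= H; rewrite /e_src /e_tgt /= Hnf1. Qed.

Fixpoint sigf (k : nat) (s : word) : seq edge :=
  if k is k'.+1 then
    (if cand s is p :: _ then mk s p :: sigf k' (e_tgt (mk s p)) else [::])
  else [::].

Definition sig s := sigf (M s).+1 s.

Lemma sigf_eq k1 k2 s : M s < k1 -> M s < k2 -> sigf k1 s = sigf k2 s.
Proof.
elim: k1 k2 s => [|k1 IH] [|k2] s //= H1 H2.
case E: (cand s) => [|p c] //; congr (_ :: _).
have [Ho Hd Hs] : [/\ edge_ok (mk s p), e_dir (mk s p) & e_src (mk s p) = s].
  by apply: mk_ok; rewrite E inE eqxx.
have := fwd_M Ho Hd; rewrite Hs => HMt.
by apply: IH; apply: leq_trans HMt _.
Qed.

Lemma sig_unfold s : sig s =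
  if cand s is p :: _ then mk s p :: sig (e_tgt (mk s p)) else [::].
Proof.
rewrite /sig /=; case E: (cand s) => [|p c] //; congr (_ :: _).
have [Ho Hd Hs] : [/\ edge_ok (mk s p), e_dir (mk s p) & e_src (mk s p) = s].
  by apply: mk_ok; rewrite E inE eqxx.
have := fwd_M Ho Hd; rewrite Hs => HMt.
exact: (sigf_eq HMt (ltnSn _)).
Qed.

Lemma sig_path s : is_path s (sig s) (nf s) /\ all (@e_dir m) (sig s).
Proof.
move: {2}(M s).+1 (ltnSn (M s)) => k; elim: k s => [|k IH] s // Hk.
rewrite (sig_unfold s); case E: (cand s) => [|p c] /=; first by rewrite Hnf2.
have [Ho Hd Hs] : [/\ edge_ok (mk s p), e_dir (mk s p) & e_src (mk s p) = s].
  by apply: mk_ok; rewrite E inE eqxx.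
have := fwd_M Ho Hd; rewrite Hs => HMt.
have [H1 H2] := IH (e_tgt (mk s p)) (leq_trans HMt Hk).
rewrite fwd_nf // Hs in H1; by repeat split.
Qed.


Fixpoint wordsn (k : nat) : seq word :=
  if k is k'.+1 then [seq a :: w | a <- enum 'I_m, w <- wordsn k'] else [:: [::]].

Lemma wordsnP w : w \in wordsn (size w).
Proof.
elim: w => [|a w IH] /=; first by rewrite inE.
by apply/allpairsP; exists (a, w); rewrite mem_enum IH.
Qed.

Definition words3 := wordsn 0 ++ wordsn 1 ++ wordsn 2 ++ wordsn 3.

Lemma words3P w : size w <= 3 -> w \in words3.
Proof.
have := wordsnP w; rewrite /words3 !mem_cat.
by case: (size w) => [|[|[|[|]]]] // ->; rewrite ?orbT.
Qed.

Definition Pb : seq (word * seq edge * seq edge) :=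
  List.flat_map (fun v => map (fun p => (v, mk v p :: sig (e_tgt (mk v p)), sig v)) (cand v)) words3.

Lemma basis_in v p : size v <= 3 -> p \in cand v ->
  List.In (v, mk v p :: sig (e_tgt (mk v p)), sig v) Pb.
Proof.
move=> Hv Hp; apply/List.in_flat_map; exists v; split; first exact/memIn/words3P.
by apply: List.in_map; apply: memIn.
Qed.

Lemma HPb : forall s p q, List.In (s, p, q) Pb -> exists t, is_path s p t /\ is_path s q t.
Proof.
move=> s p q /List.in_flat_map [v [_ /List.in_map_iff [p0 [[<- <- <-] /Inmem Hp0]]]].
have [Ho Hd Hs] := mk_ok Hp0.
exists (nf v); split; last by case: (sig_path v).
have [H1 _] := sig_path (e_tgt (mk v p0)).
by rewrite fwd_nf // Hs in H1; repeat split.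
Qed.

Local Notation homot := (@homot m R Pb).

Lemma homot_cons (e : edge) s X Y : edge_ok e -> e_src e = s -> homot (e_tgt e) X Y ->
  homot s (e :: X) (e :: Y).
Proof.
move=> Ho Hs H; have := homot_pre HPb H (r := [:: e]) (u := s).
by apply; repeat split.
Qed.

Lemma edge_uniq (e e' : edge) : e_dir e -> e_dir e' -> e_rule e = e_rule e' ->
  e_src e = e_src e' -> size (e_left e) = size (e_left e') -> e = e'.
Proof.
case: e => x r [] y //; case: e' => x' r' [] y' // _ _ /= <-.
rewrite /e_src /= => E Hs; exact: edge_eq.
Qed.

Lemma sub_occ s i r a b : occ s (i, r) -> a <= i -> i + size r.1 <= b -> b <= size s ->
  occ (take (b - a) (drop a s)) (i - a, r).
Proof.
rewrite /occ /= => /eqP H Hai Hib Hbs.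
have Hab : a <= b by apply: leq_trans Hai (leq_trans (leq_addr _ _) Hib).
rewrite (take_drop (b - a) a s) subnK // drop_drop subnK // take_drop take_takel; last by rewrite addnC.
by rewrite -take_drop H.
Qed.

Lemma disj s p q : p \in cand s -> q \in cand s -> p.1 + size p.2.1 <= q.1 ->
  exists a' b', [/\ edge_ok a', e_dir a' & e_src a' = e_tgt (mk s q)] /\
    [/\ edge_ok b', e_dir b' & e_src b' = e_tgt (mk s p)] /\ homot s [:: mk s p; b'] [:: mk s q; a'].
Proof.
move=> Hp Hq Hpq.
have Hq1 : q.1 <= size s by case/candP: Hq.
set A := take q.1 s; set B := drop q.1 s.
have HsA : size A = q.1 by rewrite size_takel.
have HpA : p \in cand A.
  case/candP: Hp => H1 H2 H3; apply/candP; split => //.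
    by rewrite HsA; apply: leq_trans (leq_addr _ _) Hpq.
  rewrite /occ /A take_drop take_takel; last by rewrite addnC.
  by rewrite -take_drop.
have HqB : (0, q.2) \in cand B.
  case/candP: Hq => H1 H2 H3; apply/candP; split => //.
  by rewrite /occ /= drop0 /B.
set E1 := mk A p; set E2 := mk B (0, q.2).
have [O1 D1 S1] := mk_ok HpA; have [O2 D2 S2] := mk_ok HqB.
have Hpf := @homot_peiffer m R Pb E1 E2 O1 O2.
rewrite S1 S2 in Hpf.
have HAB : A ++ B = s by rewrite cat_take_drop.
have [Op Dp Sp] := mk_ok Hp; have [Oq Dq Sq] := mk_ok Hq.
have Ep : e_whisk [::] B E1 = mk s p.
  apply: edge_uniq => //; first by rewrite src_whisk S1 Sp.
  rewrite /= !size_takel //; first by case/candP: Hp.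
  by apply: leq_trans (leq_addr (size p.2.1) _) Hpq.
have Eq : e_whisk A [::] E2 = mk s q.
  apply: edge_uniq => //; first by rewrite src_whisk S2 cats0 Sq.
  by rewrite /= take0 cats0 HsA.
rewrite Ep Eq HAB in Hpf.
exists (e_whisk [::] (e_tgt E2) E1), (e_whisk (e_tgt E1) [::] E2); split; last split => //.
  by split => //; rewrite src_whisk -Eq tgt_whisk S1 cats0.
by split => //; rewrite src_whisk -Ep tgt_whisk S2 cats0.
Qed.


Lemma arith3 (i j lp lq : nat) : 0 < lp <= 2 -> 0 < lq <= 2 -> i < j + lq -> j < i + lp ->
  maxn (i + lp) (j + lq) - minn i j <= 3.
Proof. move=> /andP [? ?] /andP [? ?] ? ?; lia. Qed.

Lemma ovl s p q : p \in cand s -> q \in cand s -> ~~ (p.1 + size p.2.1 <= q.1) ->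
  ~~ (q.1 + size q.2.1 <= p.1) ->
  exists X Y v pv qv, [/\ s = X ++ v ++ Y, size v <= 3, pv \in cand v & qv \in cand v] /\
    mk s p = e_whisk X Y (mk v pv) /\ mk s q = e_whisk X Y (mk v qv).
Proof.
move=> Hp Hq; rewrite -!ltnNge => Hqp Hpq.
case/candP: (Hp) => Hp1 Hp2 Hp3; case/candP: (Hq) => Hq1 Hq2 Hq3.
have Hlp := HR (memIn Hp2); have Hlq := HR (memIn Hq2).
have Hpe := occ_le Hp1 Hp3; have Hqe := occ_le Hq1 Hq3.
move: Hp3 Hq3; case: p Hp Hp1 Hp2 Hlp Hpe Hpq Hqp => i r /=.
case: q Hq Hq1 Hq2 Hlq Hqe => j r' /= Hq Hq1 Hq2 Hlq Hqe Hp Hp1 Hp2 Hlp Hpe Hpq Hqp Hp3 Hq3.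
set a := minn i j; set b := maxn (i + size r.1) (j + size r'.1).
have Hai : a <= i by rewrite geq_minl.
have Haj : a <= j by rewrite geq_minr.
have Hib : i + size r.1 <= b by rewrite leq_maxl.
have Hjb : j + size r'.1 <= b by rewrite leq_maxr.
have Hbs : b <= size s by rewrite geq_max Hpe Hqe.
have Hab : a <= b by apply: leq_trans Hai (leq_trans (leq_addr _ _) Hib).
set v := take (b - a) (drop a s).
have Hsv : size v = b - a by rewrite size_takel // size_drop leq_sub2r.
have Es : s = take a s ++ v ++ drop b s.
  have E : drop b s = drop (b - a) (drop a s) by rewrite drop_drop subnK.
  by rewrite E /v !cat_take_drop.
have Hpv : (i - a, r) \in cand v.
  apply/candP; split => //=; first by rewrite Hsv leq_sub2r // (leq_trans (leq_addr _ _) Hib).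
  exact: sub_occ.
have Hqv : (j - a, r') \in cand v.
  apply/candP; split => //=; first by rewrite Hsv leq_sub2r // (leq_trans (leq_addr _ _) Hjb).
  exact: sub_occ.
have Has : a <= size s by apply: leq_trans Hab Hbs.
exists (take a s), (drop b s), v, (i - a, r), (j - a, r'); split; [split| split] => //.
- by rewrite Hsv /a /b; apply: arith3.
- have [O D S] := mk_ok Hp; have [O' D' S'] := mk_ok Hpv; apply: edge_uniq => //.
    by rewrite S src_whisk S' -Es.
  rewrite /= size_cat !size_takel //; first by rewrite subnKC.
  - by apply: leq_sub2r; apply: leq_trans (leq_addr _ _) Hib.
  - by rewrite size_drop; apply: leq_sub2r.
- have [O D S] := mk_ok Hq; have [O' D' S'] := mk_ok Hqv; apply: edge_uniq => //.
    by rewrite S src_whisk S' -Es.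
  rewrite /= size_cat !size_takel //; first by rewrite subnKC.
  - by apply: leq_sub2r; apply: leq_trans (leq_addr _ _) Hjb.
  - by rewrite size_drop; apply: leq_sub2r.
Qed.

Lemma fwd_chain k : (forall s (e : edge), M s < k -> edge_ok e -> e_dir e -> e_src e = s ->
    homot s (e :: sig (e_tgt e)) (sig s)) ->
  forall p t t', is_path t p t' -> all (@e_dir m) p -> M t < k -> homot t (p ++ sig t') (sig t).
Proof.
move=> IH; elim => [|e p IHp] t t' /=.
  by move=> <- _ _; apply: homot_refl; exact: (proj1 (sig_path t)).
move=> [Ho [Hs Hp]] /andP [Hd Hall] Hk.
apply: homot_trans (IH t e Hk Ho Hd Hs).
apply: homot_cons => //; apply: IHp Hp Hall _.
by apply: ltn_trans Hk; rewrite -Hs fwd_M.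
Qed.

Lemma Qall s (e : edge) : edge_ok e -> e_dir e -> e_src e = s ->
  homot s (e :: sig (e_tgt e)) (sig s).
Proof.
move: {2}(M s).+1 (ltnSn (M s)) => k; elim: k s e => [|k IH] s e // Hk Ho Hd Hs.
have IHp := fwd_chain IH.
have [Hpe Ee] := edge_mk Ho Hd Hs.
set pe := (size (e_left e), e_rule e) in Hpe Ee.
have Hk' : M s <= k := Hk.
have Ht : M (e_tgt e) < k by apply: (leq_trans _ Hk'); rewrite -Hs fwd_M.
rewrite (sig_unfold s); case E: (cand s) => [|p0 c]; first by rewrite E in Hpe.
have Hp0 : p0 \in cand s by rewrite E inE eqxx.
have [O0 D0 S0] := mk_ok Hp0.
have Ht0 : M (e_tgt (mk s p0)) < k by apply: (leq_trans _ Hk'); rewrite -{2}S0 fwd_M.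
rewrite Ee in Ht *.
have Hpath : forall x, is_path (e_tgt x) (sig (e_tgt x)) (nf (e_tgt x)) by move=> x; case: (sig_path (e_tgt x)).
have Hdisj : forall a b a' b', edge_ok a' -> e_dir a' -> e_src a' = e_tgt b ->
    edge_ok b' -> e_dir b' -> e_src b' = e_tgt a -> edge_ok a -> e_src a = s -> edge_ok b -> e_src b = s ->
    M (e_tgt a) < k -> M (e_tgt b) < k ->
    homot s [:: a; b'] [:: b; a'] -> homot s (a :: sig (e_tgt a)) (b :: sig (e_tgt b)).
  move=> a b a' b' Oa' Da' Sa' Ob' Db' Sb' Oa Sa Ob Sb Ma Mb H.
  have [w [Pw1 Pw2]] := homot_path HPb H.
  move: Pw1 Pw2 => /= [_ [_ [_ [_ Ew1]]]] [_ [_ [_ [_ Ew2]]]].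
  apply: homot_trans (_ : homot s (a :: b' :: sig w) _).
    apply: homot_cons => //; apply: homot_sym; rewrite -Ew1; apply: IH => //.
  apply: homot_trans (_ : homot s (b :: a' :: sig w) _).
    have := homot_post HPb H (t := w) (w := sig w) (v := nf w).
    apply => /=; last by case: (sig_path w).
    by rewrite Sa Sb' -Ew1; repeat split.
  apply: homot_cons => //; rewrite -Ew2; apply: IH => //.
have [Hl|Hnl] := leqP (pe.1 + size pe.2.1) p0.1.
  have [a' [b' [[Oa' Da' Sa'] [[Ob' Db' Sb'] H]]]] := disj Hpe Hp0 Hl.
  have [Op Dp Sp] := mk_ok Hpe.
  exact: (Hdisj _ _ a' b').
have [Hl'|Hnl'] := leqP (p0.1 + size p0.2.1) pe.1.
  have [a' [b' [[Oa' Da' Sa'] [[Ob' Db' Sb'] H]]]] := disj Hp0 Hpe Hl'.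
  have [Op Dp Sp] := mk_ok Hpe.
  apply: homot_sym; exact: (Hdisj _ _ a' b').
have N1 : ~~ (pe.1 + size pe.2.1 <= p0.1) by rewrite -ltnNge.
have N2 : ~~ (p0.1 + size p0.2.1 <= pe.1) by rewrite -ltnNge.
have [X [Y [v [pv [qv [[Es Hv Hpv Hqv] [E1 E2]]]]]]] := ovl Hpe Hp0 N1 N2.
set W := X ++ nf v ++ Y.
have Hhalf : forall pv' (e' : edge), pv' \in cand v -> e' = e_whisk X Y (mk v pv') ->
    homot s (e' :: sig (e_tgt e')) (map (e_whisk X Y) (sig v) ++ sig W).
  move=> pv' e' Hpv' Ee'.
  have [Ov Dv Sv] := mk_ok Hpv'.
  have Bp := @homot_basis m R Pb _ _ _ (basis_in Hv Hpv').
  have Bw := homot_whisk X Y Bp; rewrite /= -Es -Ee' in Bw.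
  have [P1 F1] := sig_path (e_tgt (mk v pv')).
  have Pw := path_whisk X Y P1; rewrite fwd_nf // Sv -/W -tgt_whisk -Ee' in Pw.
  have Fw : all (@e_dir m) (map (e_whisk X Y) (sig (e_tgt (mk v pv')))) by rewrite all_map.
  have Os' : edge_ok e' by rewrite Ee'.
  have Ss' : e_src e' = s by rewrite Ee' src_whisk Sv.
  have Ds' : e_dir e' by rewrite Ee'.
  have Mt' : M (e_tgt e') < k by apply: (leq_trans _ Hk'); rewrite -Ss' fwd_M.
  apply: homot_trans (_ : homot s (e' :: map (e_whisk X Y) (sig (e_tgt (mk v pv'))) ++ sig W) _).
    apply: homot_cons => //; apply: homot_sym; exact: IHp Pw Fw Mt'.
  apply: (homot_post HPb Bw (t := W)); last exact: (proj1 (sig_path W)).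
  by [] || (split; [done | split; done]).
apply: homot_trans (Hhalf pv _ Hpv E1) _.
apply: homot_sym; exact: Hhalf qv _ Hqv E2.
Qed.

Lemma path_nf s p t : is_path s p t -> nf s = nf t.
Proof.
elim: p s => [|e p IH] s /=; first by move=> ->.
by move=> [Ho [<- Hp]]; rewrite -fwd_nf // (IH _ Hp).
Qed.

Lemma rinv r s t : is_path s r t -> homot s (r ++ pinv r) [::].
Proof.
elim: r s => [|e r IH] s /=.
  by move=> ->; apply: (@homot_refl m R Pb t [::] t).
move=> [Ho [Hs Hp]].
have H1 := IH _ Hp.
have Hpi := path_cat Hp (path_inv Hp).
have Hinv : is_path (e_tgt e) [:: e_inv e] s by rewrite /= src_inv tgt_inv; repeat split.
have := @homot_comp m R Pb s [:: e] (e_tgt e) (r ++ pinv r) [::] (e_tgt e) [:: e_inv e] s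
  (ltac:(by repeat split)) Hpi (erefl _) Hinv H1.
rewrite /pinv /= rev_cons -cats1 -/(pinv r) -!catA /= => H.
apply: homot_trans H _; rewrite -Hs; exact: homot_inv.
Qed.

Lemma canon p s t : is_path s p t -> homot s p (sig s ++ pinv (sig t)).
Proof.
elim: p s => [|e p IH] s /=.
  move=> <-; apply: homot_sym; exact: rinv (proj1 (sig_path s)).
move=> [Ho [Hs Hp]].
have Hnf : nf t = nf (e_tgt e) by rewrite (path_nf Hp).
have Hpt : is_path (nf (e_tgt e)) (pinv (sig t)) t by rewrite -Hnf; apply: path_inv; exact: (proj1 (sig_path t)).
apply: homot_trans (homot_cons Ho Hs (IH _ Hp)) _.
case Hd: (e_dir e).
  apply: (homot_post HPb (Qall Ho Hd Hs)) Hpt.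
  by rewrite /=; repeat split => //; exact: (proj1 (sig_path _)).
set f := e_inv e.
have Of : edge_ok f by [].
have Df : e_dir f by rewrite /f /= Hd.
have Sf : e_src f = e_tgt e by rewrite src_inv.
have Tf : e_tgt f = s by rewrite tgt_inv.
have Q1 := Qall Of Df Sf; rewrite Tf in Q1.
apply: homot_trans (_ : homot s (e :: f :: sig s ++ pinv (sig t)) _).
  apply: homot_cons => //.
  apply: (homot_post HPb (homot_sym Q1)) Hpt.
  exact: (proj1 (sig_path _)).
have Hss : is_path s (sig s ++ pinv (sig t)) t.
  have Hst : nf s = nf t by rewrite Hnf -Hs fwd_nf.
  by apply: path_cat (proj1 (sig_path s)) _; rewrite Hst; apply: path_inv; exact: (proj1 (sig_path t)).
have := @homot_comp m R Pb s [::] s [:: e; f] [::] s (sig s ++ pinv (sig t)) t (erefl _)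
  (ltac:(by rewrite /= Tf; repeat split)) (erefl _) Hss.
rewrite /=; apply; rewrite -Hs; exact: homot_inv.
Qed.

Lemma basis_ok : homotopy_basis R Pb.
Proof.
split; first exact: HPb.
move=> s t p q Hp Hq; apply: homot_trans (canon Hp) _; apply: homot_sym; exact: canon.
Qed.

End Sq.

Section Inst.
Variable n : nat.
Local Notation tab := (seq (seq 'I_n)).
Local Notation rins := (@lps_rins n).
Definition mm := #|{set 'I_n}|.
Local Notation word := (seq 'I_mm).

Definition colof (i : 'I_mm) : seq 'I_n := [seq x <- enum 'I_n | x \in enum_val i].
Definition gen (c : seq 'I_n) : 'I_mm := enum_rank [set x in c].
Definition gg (i : 'I_mm) : seq 'I_n := rev (colof i).
Definition flat (u : word) : seq 'I_n := flatten (map gg u).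
Definition cols (u : word) : tab := map colof u.
Definition normal (u : word) : bool := valid (cols u).
Definition nf (u : word) : word := map gen (lps_Rl (flat u)).

Lemma ltO_trans : transitive (@ltO n).
Proof. by move=> a b c; rewrite /ltO; apply: ltn_trans. Qed.

Lemma enum_sorted : sorted (@ltO n) (enum 'I_n).
Proof.
have := iota_ltn_sorted 0 n; rewrite -val_enum_ord sorted_map.
by [].
Qed.

Lemma colof_sorted i : sorted (@ltO n) (colof i).
Proof. exact: (sorted_filter ltO_trans _ enum_sorted). Qed.

Lemma colofK c : sorted (@ltO n) c -> colof (gen c) = c.
Proof.
move=> Hc; apply: (irr_sorted_eq ltO_trans) => //; first by move=> x; rewrite /ltO ltnn.
  exact: colof_sorted.
by move=> x; rewrite /colof /gen enum_rankK mem_filter in_set mem_enum andbT.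
Qed.

Lemma genK i : gen (colof i) = i.
Proof.
rewrite /gen; have -> : [set x in colof i] = enum_val i.
  by apply/setP => x; rewrite in_set /colof mem_filter mem_enum andbT.
exact: enum_valK.
Qed.

Lemma flat_cols u : flat u = reading (cols u).
Proof. by rewrite /flat /reading /cols -map_comp. Qed.

Lemma valid_sorted (T : tab) : valid T -> all (sorted (@ltO n)) T.
Proof. by elim: T => [|c T IH] //=; case: c => [|z c] //= /andP [/andP [-> _] /IH]. Qed.

Lemma cols_gen (T : tab) : valid T -> cols (map gen T) = T.
Proof.
move/valid_sorted; elim: T => [|c T IH] //= /andP [Hc HT].
by rewrite colofK // IH.
Qed.

Lemma cols_nf u : cols (nf u) = lps_Rl (flat u).
Proof. by rewrite cols_gen // valid_Rl. Qed.

Lemma flat_nf u : flat (nf u) = reading (lps_Rl (flat u)).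
Proof. by rewrite flat_cols cols_nf. Qed.

Lemma nf_normal u : normal u -> nf u = u.
Proof.
move=> H; rewrite /nf flat_cols Rl_reading //.
by rewrite /cols -map_comp (eq_map genK) map_id.
Qed.

Lemma flat_cat u v : flat (u ++ v) = flat u ++ flat v.
Proof. by rewrite /flat map_cat flatten_cat. Qed.

Lemma Rl_rule x l y : lps_Rl (flat (x ++ l ++ y)) = lps_Rl (flat (x ++ nf l ++ y)).
Proof.
rewrite !flat_cat /lps_Rl !foldl_cat; congr foldl.
by rewrite (foldl_reading _ (flat l)) flat_nf.
Qed.

Lemma nf_rule x l y : nf (x ++ l ++ y) = nf (x ++ nf l ++ y).
Proof. by rewrite /nf Rl_rule. Qed.


Definition letters (T : tab) := sumn (map size T).

Lemma letters_cat (A B : tab) : letters (A ++ B) = letters A + letters B.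
Proof. by rewrite /letters map_cat sumn_cat. Qed.
Lemma letters_cons c (A : tab) : letters (c :: A) = size c + letters A.
Proof. by []. Qed.

Fixpoint muT (T : tab) : nat := if T is c :: T' then letters T + muT T' else 0.

Lemma muT_cat (A B : tab) : muT (A ++ B) = muT A + size A * letters B + muT B.
Proof.
elim: A => [|c A IH] //=; rewrite IH !letters_cons letters_cat; lia.
Qed.

Lemma letters_rins (T : tab) x : letters (rins T x) = (letters T).+1.
Proof.
elim: T => [|c T IH] //=; case: c => [|z c] /=; first by rewrite !letters_cons IH.
by case: ifP => _ /=; rewrite !letters_cons ?IH /=; lia.
Qed.

Lemma letters_foldl (T : tab) w : letters (foldl rins T w) = letters T + size w.
Proof. by elim: w T => [|x w IH] T /=; rewrite ?addn0 // IH letters_rins addSnnS. Qed.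

Lemma letters_Rl w : letters (lps_Rl w) = size w.
Proof. by rewrite /lps_Rl letters_foldl. Qed.

Lemma size_reading (T : tab) : size (reading T) = letters T.
Proof. by elim: T => [|c T IH] //=; rewrite reading_cons size_cat size_rev IH. Qed.

Lemma size_rins (T : tab) x : size (rins T x) <= (size T).+1.
Proof.
elim: T => [|c T IH] //=; case: c => [|z c] /=; first by rewrite ltnS.
by case: ifP => _ //=; rewrite ltnS.
Qed.

Lemma size_rins_has (T : tab) x : has (fun c => ~~ skipc x c) T -> size (rins T x) = size T.
Proof.
elim: T => [|c T IH] //=; case: c => [|z c] /=; first by move/IH ->.
by rewrite -ltnNge; case: ifP => //= _ /IH ->.
Qed.

Lemma size_foldl_col (T : tab) c : sorted (@ltO n) c ->
  size (foldl rins T (rev c)) <= (size T).+1.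
Proof.
elim: c => [|z c IH] /=; first by [].
rewrite rev_cons -cats1 foldl_cat /=.
case: c IH => [|w c] IH Hs; first exact: size_rins.
move: Hs => /= /andP [Hzw Hs].
have [A [B [E [H1 H2]]]] : exists A B, foldl rins T (rev (w :: c)) = A ++ B /\
    all (skipc w) A /\ has (hasb w) A.
  by rewrite rev_cons -cats1 foldl_cat /=; apply: rins_split.
rewrite size_rins_has; first by apply: IH.
rewrite E has_cat; apply/orP; left; apply: sub_has H2 => d.
by case: d => // y d /= /eqP ->; rewrite -ltnNge.
Qed.

Lemma first_col (h : 'I_n) ys (c0 : seq 'I_n) (T : tab) :
  (if c0 is z :: _ then (h < z)%N else false) -> all (fun y : 'I_n => (h < y)%N) ys ->
  exists f0 F, foldl rins (c0 :: T) ys = f0 :: F /\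
    (if f0 is z :: _ then (h < z)%N else false) /\ size c0 <= size f0.
Proof.
elim: ys c0 T => [|y ys IH] c0 T Hc /=.
  move=> _; exists c0, T; split; [done | split; [|exact: leqnn]]; by case: c0 Hc.
move=> /andP [Hy Hys]; case: c0 Hc => [|z c] //= Hc.
case: ifP => _.
  have [f0 [F [E [H1 H2]]]] := IH (y :: z :: c) T Hy Hys.
  by exists f0, F; split => //; split => //; apply: leq_trans H2.
exact: IH.
Qed.

Lemma Rl_col (c : seq 'I_n) : sorted (@ltO n) c -> lps_Rl (rev c) = if c is [::] then [::] else [:: c].
Proof.
case: c => [|z c] // Hs; rewrite /lps_Rl foldl_col //.
Qed.

Lemma colof_nil_normal i : normal [:: i] -> colof i != [::].
Proof. by rewrite /normal /=; case: (colof i). Qed.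

Lemma rule_meas l : ~~ normal l -> size l = 1 \/ size l = 2 ->
  [/\ size (nf l) <= size l, muT (cols (nf l)) <= muT (cols l) &
      muT (cols (nf l)) + size (nf l) < muT (cols l) + size l].
Proof.
rewrite -(size_map colof) cols_nf /nf size_map flat_cols.
case: l => [|i [|j [|k l]]] //= Hn Hs; last by case: Hs.
  have E : colof i = [::].
    move: Hn; rewrite /normal /=; have := colof_sorted i.
    by case: (colof i) => //= z c ->.
  by rewrite E.
have Si := colof_sorted i; have Sj := colof_sorted j.
rewrite /reading /= cats0 /lps_Rl foldl_cat -/(lps_Rl (rev (colof i))) Rl_col //.
move: Hn; rewrite /normal /=.
case: (colof i) Si => [|zi ci] Si.
  rewrite /= -/(lps_Rl (rev (colof j))) Rl_col //.
  by case: (colof j) => [|zj cj] /=; rewrite ?letters_cons /letters /= => *; split; lia.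
case: (colof j) Sj => [|h cj] Sj.
  by rewrite /= ?letters_cons /letters /= => *; split; lia.
rewrite Si Sj /= andbT => Hn.
have Hall : all (fun y : 'I_n => (h < y)%N) cj := order_path_min ltO_trans Sj.
have Hh : (h < zi)%N.
  rewrite ltnNge; apply/negP => Hz; move: Hn; rewrite Hz /=.
  move/negP; apply; rewrite andbT; apply/allP => y Hy; apply: leq_trans Hz (ltnW _).
  by move/allP: Hall; apply.
rewrite rev_cons -cats1 foldl_cat.
have [f0 [F [E [H1 H2]]]] := @first_col h (rev cj) (zi :: ci) [::] Hh (ltac:(by rewrite all_rev)).
have Hsz := size_foldl_col [:: zi :: ci] Sj.
have Hlt := letters_foldl [:: zi :: ci] (rev (h :: cj)).
rewrite rev_cons -cats1 foldl_cat E /= in Hsz Hlt.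
rewrite E /=; case: f0 E H1 H2 Hsz Hlt => [|z f0] // E H1 H2 /=; rewrite H1 /= => Hsz Hlt.
rewrite !letters_cons /= in Hlt *.
case: F E Hsz Hlt => [|c1 [|c2 F]] E //= Hsz Hlt; rewrite ?letters_cons /letters /= in Hlt *;
  rewrite ?size_cat ?size_rev /= in Hlt H2; split; lia.
Qed.

Definition words12 : seq word := wordsn mm 1 ++ wordsn mm 2.
Definition RR : seq (word * word) := [seq (u, nf u) | u <- words12 & ~~ normal u].
Definition MM (u : word) : nat := muT (cols u) + size u.

Lemma wordsn_size k w : w \in wordsn mm k -> size w = k.
Proof.
elim: k w => [|k IH] w /=; first by rewrite inE => /eqP ->.
by move/allpairsP => [[a u] [_ Hu ->]] /=; rewrite (IH _ Hu).
Qed.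

Lemma RR_in r : List.In r RR ->
  [/\ r.2 = nf r.1, ~~ normal r.1 & (size r.1 = 1 \/ size r.1 = 2)].
Proof.
move/Inmem/mapP => [u]; rewrite mem_filter => /andP [Hn Hu] -> /=; split => //.
move: Hu; rewrite mem_cat => /orP [] /wordsn_size ->; by [left|right].
Qed.

Lemma HR' r : List.In r RR -> 0 < size r.1 <= 2.
Proof. by case/RR_in => _ _ [] ->. Qed.

Lemma cols_cat u v : cols (u ++ v) = cols u ++ cols v.
Proof. exact: map_cat. Qed.

Lemma letters_nf l : letters (cols (nf l)) = letters (cols l).
Proof. by rewrite cols_nf letters_Rl flat_cols size_reading. Qed.

Lemma HM' x r y : List.In r RR -> MM (x ++ r.2 ++ y) < MM (x ++ r.1 ++ y).
Proof.
case/RR_in => -> Hn Hs; have [H1 H2 H3] := rule_meas Hn Hs.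
rewrite /MM !cols_cat !muT_cat !letters_cat letters_nf !size_cat !size_map.
have := leq_mul H1 (leqnn (letters (cols y))).
rewrite size_map in H1 H3 *; lia.
Qed.

Lemma Hnf1' x r y : List.In r RR -> nf (x ++ r.1 ++ y) = nf (x ++ r.2 ++ y).
Proof. by case/RR_in => -> _ _; rewrite -nf_rule. Qed.

Lemma valid_local (c d : seq 'I_n) (T : tab) : valid [:: c; d] -> valid (d :: T) -> valid [:: c, d & T].
Proof.
case: c => [|zc c] //; case: d => [|zd d] //= /andP [/andP [Sc /andP [/andP [Hzd Hd] _]] _].
move=> /andP [/andP [Sd HT] VT]; rewrite Sc Sd HT VT /= Hzd andbT /= Hd /=.
apply: sub_all HT => e; apply: sub_all => y; exact: leq_trans Hzd.
Qed.

Lemma nonnormal_split s : ~~ normal s ->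
  exists x l y, [/\ s = x ++ l ++ y, l \in words12 & ~~ normal l].
Proof.
elim: s => [|i s IH] //.
have Si := colof_sorted i.
case Ei: (colof i) Si => [|zi ci] Si.
  move=> _; exists [::], [:: i], s; split => //; last by rewrite /normal /= Ei.
  by rewrite /words12 mem_cat (wordsnP [:: i]).
case: s IH => [|j s] IH.
  by rewrite /normal /= Ei Si.
case Hij : (normal [:: i; j]).
  move=> Hn; have [|x [l [y [E Hl Hnl]]]] := IH.
    apply/negP => Hjs; move/negP: Hn; apply.
    exact: (valid_local Hij Hjs).
  by exists (i :: x), l, y; rewrite E.
move=> _; exists [::], [:: i; j], s; split => //; last by rewrite Hij.
by rewrite /words12 mem_cat (wordsnP [:: i; j]) orbT.
Qed.

Lemma Hnf2' s : cand RR s = [::] -> nf s = s.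
Proof.
move=> Hc; apply: nf_normal; apply/negPn/negP => /nonnormal_split [x [l [y [E Hl Hnl]]]].
have : (size x, (l, nf l)) \in cand RR s.
  apply/candP; split => /=.
  - by rewrite E size_cat leq_addr.
  - by apply/mapP; exists l => //; rewrite mem_filter Hnl.
  - by rewrite /occ /= E drop_size_cat // take_size_cat.
by rewrite Hc.
Qed.

Lemma path_Rl s p t : is_path RR s p t -> lps_Rl (flat s) = lps_Rl (flat t).
Proof.
elim: p s => [|e p IH] s /=; first by move=> ->.
move=> [Ho [<- Hp]]; rewrite -(IH _ Hp).
case: e Ho {Hp} => x [l r'] dd y /= /RR_in [/= E _ _]; subst r'.
rewrite /e_src /e_tgt /=; case: dd => /=; [exact: Rl_rule | symmetry; exact: Rl_rule].
Qed.

End Inst.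

Theorem corollary5p7 (n : nat) :
  finite_derivation_type (@lps_cong n).
Proof.
exists (mm n), (@gg n), (RR n), (Pb (RR n) (@MM n)); split; last first.
  exact: (basis_ok (@HR' n) (@HM' n) (@Hnf1' n) (@Hnf2' n)).
split.
  move=> w; exists (map (@gen n) (lps_Rl w)).
  rewrite /lps_cong -/(flat _) flat_cols cols_gen ?valid_Rl //.
  by rewrite Rl_reading // valid_Rl.
move=> u v; split.
  rewrite /lps_cong -!/(flat _) => E.
  have [Pu _] := sig_path (@HM' n) (@Hnf1' n) (@Hnf2' n) u.
  have [Pv _] := sig_path (@HM' n) (@Hnf1' n) (@Hnf2' n) v.
  have Enf : nf u = nf v by rewrite /nf E.
  rewrite Enf in Pu.
  by exists (sig (RR n) (@MM n) u ++ pinv (sig (RR n) (@MM n) v)); apply: path_cat Pu (path_inv Pv).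
by move=> [p Hp]; rewrite /lps_cong; exact: path_Rl Hp.
Qed.
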